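(* If a mixed graph $G=(V,D,B)$ with $V=[m]$ has $|D|+|B|>\binom{m}{2}$ edges (where $|B|$ counts unordered bidirected edges), then $G$ is HTC-infinite-to-one: every family $(Y_v:v\in V)$ of subsets of $V$ either contains a set $Y_v$ not satisfying the half-trek criterion with respect to $v$, or contains a pair $Y_v,Y_w$ with $v\in Y_w$ and $w\in Y_v$.
   Context: A mixed graph is $G=(V,D,B)$ with $V=[m]$, $D\subseteq V\times V$ directed edges $v\to w$, $B$ a set of bidirected edges $v\leftrightarrow w$ (unordered), no self-loops. $\mathrm{pa}(v)=\{w:w\to v\in D\}$, $\mathrm{sib}(v)=\{w:w\leftrightarrow v\in B\}$. A half-trek from $v$ to $w$ is a path $v\leftrightarrow w_0\to w_1\to\cdots\to w_r=w$ (left side $\{v\}$, right side $\{w_0,\dots,w_r\}$) or $v\to w_1\to\cdots\to w_r=w$, $r\ge0$ (left side $\{v\}$, right side $\{v,w_1,\dots,w_r\}$); nodes may repeat. A system of half-treks from $X$ to $Y$ is a set of half-treks with distinct sources forming $X$ and distinct targets forming $Y$; no sided intersection means pairwise disjoint left sides and pairwise disjoint right sides. $Y$ satisfies the half-trek criterion w.r.t. $v$ if $|Y|=|\mathrm{pa}(v)|$, $Y\cap(\{v\}\cup\mathrm{sib}(v))=\emptyset$, and there is a system of half-treks with no sided intersection from $Y$ to $\mathrm{pa}(v)$. *)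

(* Defs.v *)
From mathcomp Require Import all_boot.
Set Implicit Arguments. Unset Strict Implicit. Unset Printing Implicit Defensive.

(* A mixed graph on V = 'I_m is given by two relations:
   D v w  <-> v -> w is a directed edge,
   B v w  <-> v <-> w is a bidirected edge (B symmetric; each unordered
   pair {v,w} is one bidirected edge).  No self-loops: both irreflexive. *)

Section MixedGraph.
Variable m : nat.
Variables (D B : rel 'I_m).

Definition pa (v : 'I_m) : {set 'I_m} := [set w | D w v].
Definition sib (v : 'I_m) : {set 'I_m} := [set w | B w v].

Definition numD : nat := #|[set p : 'I_m * 'I_m | D p.1 p.2]|.
Definition numB : nat := #|[set p : 'I_m * 'I_m | (p.1 < p.2) && B p.1 p.2]|.

(* A half-trek is encoded by its source ht_src, and its right side
   ht_head :: ht_tail, which is a directed path.  Either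
   ht_src <-> ht_head (first kind: v <-> w0 -> ... -> wr), or
   ht_head = ht_src (second kind: v -> w1 -> ... -> wr, right side
   {v, w1, ..., wr}).  The left side is {ht_src}. *)
Record halftrek := HT { ht_src : 'I_m; ht_head : 'I_m; ht_tail : seq 'I_m }.

Definition ht_right (t : halftrek) : seq 'I_m := ht_head t :: ht_tail t.
Definition ht_tgt (t : halftrek) : 'I_m := last (ht_head t) (ht_tail t).

Definition is_halftrek (t : halftrek) : bool :=
  ((ht_head t == ht_src t) || B (ht_src t) (ht_head t))
  && path D (ht_head t) (ht_tail t).

(* s is a system of half-treks from X to Y with no sided intersection:
   distinct sources forming X, distinct targets forming Y, pairwise
   disjoint left sides (= distinct sources) and pairwise disjoint
   right sides. *)
Definition nsi_system (s : seq halftrek) (X Y : {set 'I_m}) : Prop :=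
  [/\ all is_halftrek s,
      uniq (map ht_src s) /\ [set x in map ht_src s] = X,
      uniq (map ht_tgt s) /\ [set y in map ht_tgt s] = Y &
      pairwise (fun t1 t2 => [disjoint ht_right t1 & ht_right t2]) s].

Definition HTC (Y : {set 'I_m}) (v : 'I_m) : Prop :=
  [/\ #|Y| = #|pa v|,
      Y :&: (v |: sib v) = set0 &
      exists s : seq halftrek, nsi_system s Y (pa v)].

Definition HTC_infinite_to_one : Prop :=
  forall Yf : 'I_m -> {set 'I_m},
    (exists v, ~ HTC (Yf v) v) \/
    (exists v w, [/\ v != w, v \in Yf w & w \in Yf v]).

End MixedGraph.

(* Main.v *)
Require Import Defs.
From mathcomp Require Import all_boot.
From mathcomp Require Import zify.

Lemma card_ind (T : finType) (A : {set T}) : #|A| = \sum_(x : T) (x \in A).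
Proof. by rewrite -sum1_card big_mkcond /=; apply: eq_bigr => x _; case: (x \in A). Qed.

Lemma sum_pair (m : nat) (F : 'I_m -> 'I_m -> bool) :
  #|[set p : 'I_m * 'I_m | F p.1 p.2]| = \sum_v \sum_w (F v w : nat).
Proof.
rewrite card_ind pair_big /=; apply: eq_bigr => p _; by rewrite inE.
Qed.

Lemma bin2_twice m : 2 * 'C(m, 2) = m * (m - 1).
Proof.
elim: m => [|m IH] //. rewrite binS bin1 mulnDr IH. case: m {IH} => [|m] //. rewrite subn1 /= !mulSn !mulnS. lia.
Qed.

Lemma dsplit (m : nat) (F G : 'I_m -> 'I_m -> nat) :
  \sum_(v : 'I_m) \sum_(w : 'I_m) (F v w + G v w) =
  \sum_(v : 'I_m) \sum_(w : 'I_m) F v w + \sum_(v : 'I_m) \sum_(w : 'I_m) G v w.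
Proof. rewrite -big_split; apply: eq_bigr => v _; by rewrite big_split. Qed.

Theorem mainTheorem4 (m : nat) (D B : rel 'I_m)
  (hD : irreflexive D) (hBirr : irreflexive B) (hBsym : symmetric B)
  (hedges : 'C(m, 2) < numD D + numB B) :
  HTC_infinite_to_one D B.
Proof.
move=> Yf.
pose cond v := (#|Yf v| == #|pa D v|) && (Yf v :&: (v |: sib B v) == set0).
case: (boolP [exists v, ~~ cond v]) => [/existsP [v hv]|/existsPn hall].
  left; exists v => [[h1 h2 _]]; move: hv; by rewrite /cond h1 h2 !eqxx.
case: (boolP [exists v, exists w, (v != w) && (v \in Yf w) && (w \in Yf v)]).
  move=> /existsP [v /existsP [w /andP [/andP [h1 h2] h3]]].
  by right; exists v, w.
move=> /existsPn hno; exfalso.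
have hc v : cond v by have := hall v; rewrite negbK.
have hcard v : #|Yf v| = #|pa D v| by case/andP: (hc v) => /eqP.
have hY v w : v \in Yf w -> (v != w) && ~~ B v w.
  move=> hv; case/andP: (hc w) => _ /eqP /setP /(_ v).
  rewrite !inE hv /= => /negbT; by rewrite negb_or.
have hpt (v w : 'I_m) : (v \in Yf w) + (w \in Yf v) + ((v < w) && B v w)
     + ((w < v) && B v w) + (v == w) <= 1.
  case h1: (v \in Yf w).
    have := hY _ _ h1; case/andP => /negbTE -> /negbTE ->.
    have := hno v; move/existsPn/(_ w); rewrite h1 andbT.
    move: (hY _ _ h1) => /andP [-> _] /= /negbTE -> /=; by rewrite !andbF.
  case h2: (w \in Yf v).
    have := hY _ _ h2; case/andP => hne hb.
    rewrite hBsym (negbTE hb) eq_sym (negbTE hne) /=; by rewrite !andbF.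
  case: (ltngtP v w) => [h|h|h] /=.
  - rewrite -val_eqE /= (ltn_eqF h); by case: (B v w).
  - rewrite -val_eqE /= (gtn_eqF h); by case: (B v w).
  - by move/val_inj: h => ->; rewrite eqxx.
have hsum : \sum_(v : 'I_m) \sum_(w : 'I_m) ((v \in Yf w) + (w \in Yf v) + ((v < w) && B v w)
     + ((w < v) && B v w) + (v == w)) <= \sum_(v : 'I_m) \sum_(w : 'I_m) 1.
  by apply: leq_sum => v _; apply: leq_sum => w _; apply: hpt.
rewrite !dsplit in hsum.
have eD : numD D = \sum_(v : 'I_m) \sum_(w : 'I_m) (w \in Yf v : nat).
  rewrite /numD (@sum_pair _ (D)) exchange_big /=; apply: eq_bigr => w _.
  rewrite -card_ind hcard card_ind; apply: eq_bigr => v _; by rewrite inE.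
have eD' : numD D = \sum_(v : 'I_m) \sum_(w : 'I_m) (v \in Yf w : nat).
  by rewrite eD exchange_big.
have eB : numB B = \sum_(v : 'I_m) \sum_(w : 'I_m) ((v < w) && B v w : nat).
  by rewrite /numB (@sum_pair _ (fun v w => (v < w) && B v w)).
have eB' : numB B = \sum_(v : 'I_m) \sum_(w : 'I_m) ((w < v) && B v w : nat).
  rewrite eB exchange_big /=; apply: eq_bigr => v _; apply: eq_bigr => w _.
  by rewrite hBsym.
have eM : \sum_(v : 'I_m) \sum_(w : 'I_m) (v == w : nat) = m.
  rewrite -[RHS]card_ord -sum1_card; apply: eq_bigr => v _.
  rewrite (bigD1 v) //= eqxx big1 // => w hw; by rewrite eq_sym (negbTE hw).
have eT : \sum_(v : 'I_m) \sum_(w : 'I_m) 1 = m * m.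
  rewrite (eq_bigr (fun _ => m)) => [|v _]; last by rewrite big_const_ord iter_addn_0 mul1n.
  by rewrite big_const_ord iter_addn_0.
rewrite -eD -eD' -eB -eB' eM eT in hsum.
have := bin2_twice m. nia.
Qed.
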